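(* Let $S\subset\mathbb{Z}^d$ be finite and even, and let $\{\mathcal{S}_u\}_{u\in\partial_\bullet S}$ be subsets of $\mathcal{S}$. Let $\mathcal{F}\subset\mathcal{S}^S$ be such that $f(u)\in\mathcal{S}_u$ for every $f\in\mathcal{F}$ and $u\in\partial_\bullet S$. Let $f$ be a random element of $\mathcal{F}$ chosen with probability proportional to $\omega_f$. For each odd vertex $v\in S$, let $X_v$ be a random variable measurable with respect to $f|_{N(v)}$. Then \[ \omega(\mathcal{F})\le\prod_{v\in S\text{ odd}}\ \prod_x\left[\frac{Z(\Psi_{v,x},I_{v,x})}{\mathbb{P}(X_v=x)}\right]^{\frac{1}{2d}\mathbb{P}(X_v=x)}\cdot\prod_{u\in\partial_\bullet S}(\lambda_{\mathcal{S}_u})^{\frac{1}{2d}|\partial u\cap\partial S|}, \] where the inner product is over $x$ in the support of $X_v$, and $\Psi_{v,x}$ and $I_{v,x}$ are the supports of $f|_{N(v)}$ and of $f(v)$, respectively, on the event $\{X_v=x\}$.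
   Context: A spin system: finite set $\mathcal{S}$, activities $\lambda_i>0$, symmetric pair interactions $\lambda_{i,j}\ge0$. For $f:S\to\mathcal{S}$, $\omega_f=\prod_{v\in S}\lambda_{f(v)}\prod_{\{u,v\}\in E(S)}\lambda_{f(u),f(v)}$ where $E(S)$ is the set of nearest-neighbour edges of $\mathbb{Z}^d$ with both endpoints in $S$; $\omega(\mathcal{F})=\sum_{f\in\mathcal{F}}\omega_f$; $\lambda_I=\sum_{i\in I}\lambda_i$. A vertex is even/odd according to the parity of its coordinate sum. $N(v)$ is the set of $2d$ neighbours of $v$; $\partial_\bullet S$ is the set of vertices of $S$ with a neighbour outside $S$; $S$ is even if $\partial_\bullet S$ consists of even vertices (so $N(v)\subset S$ for odd $v\in S$). $\partial u$ is the set of edges incident to $u$ and $\partial S$ the set of edges with exactly one endpoint in $S$. For a set $\Psi$ of functions $\psi:N(v)\to\mathcal{S}$ and $I\subset\mathcal{S}$, $Z(\Psi,I)=\sum_{\psi\in\Psi}\big(\prod_{u\in N(v)}\lambda_{\psi(u)}\big)\big(\sum_{i\in I}\lambda_i\prod_{u\in N(v)}\lambda_{i,\psi(u)}\big)^{2d}$. *)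

(* Defs.v *)
From HB Require Import structures.
From mathcomp Require Import all_boot all_order all_algebra.
From mathcomp Require Import finmap.
From mathcomp Require Import reals exp.
Set Implicit Arguments. Unset Strict Implicit. Unset Printing Implicit Defensive.
Import Order.TTheory GRing.Theory Num.Theory.
Local Open Scope ring_scope.


Definition vtx (d : nat) := {ffun 'I_d -> int}.

Definition evenv d (v : vtx d) : bool := (2 %| \sum_i v i)%Z.

Definition nbr d (v : vtx d) (k : 'I_d * bool) : vtx d :=
  [ffun j => v j + (if j == k.1 then (if k.2 then 1 else -1) else 0)].

(* u has a neighbour outside S (so for u in S: u is in the inner boundary) *)
Definition has_out_nbr d (S : {fset vtx d}) (u : vtx d) : bool :=
  [exists k, nbr u k \notin S].

(* |partial u ∩ partial S| : number of edges from u leaving S *)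
Definition n_out d (S : {fset vtx d}) (u : vtx d) : nat :=
  #|[set k | nbr u k \notin S]|.

Definition even_set d (S : {fset vtx d}) : Prop :=
  forall u, u \in S -> has_out_nbr S u -> evenv u.

Section Spin.
Variables (R : realType) (Sp : finType) (lam : Sp -> R) (lam2 : Sp -> Sp -> R).
Variables (d : nat) (S : {fset vtx d}).

(* weight of a configuration; every nearest-neighbour edge of Z^d has exactly
   one even endpoint, so edges of E(S) are enumerated as (even u, neighbour w) *)
Definition weight (f : {ffun S -> Sp}) : R :=
  (\prod_(v : S) lam (f v)) *
  \prod_(u : S | evenv (val u))
     \prod_(w : S | [exists k, val w == nbr (val u) k]) lam2 (f u) (f w).

Definition omega (F : {set {ffun S -> Sp}}) : R := \sum_(f in F) weight f.

Definition lamI (I : {set Sp}) : R := \sum_(i in I) lam i.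

(* f restricted to N(v), with N(v) identified with 'I_d * bool via nbr;
   (the default branch is never used when N(v) ⊂ S) *)
Definition restr (f : {ffun S -> Sp}) (v : S) : {ffun 'I_d * bool -> Sp} :=
  [ffun k => match insub (nbr (val v) k) with Some w => f w | None => f v end].

Definition Zpart (Psi : {set {ffun 'I_d * bool -> Sp}}) (I : {set Sp}) : R :=
  \sum_(psi in Psi) (\prod_k lam (psi k)) *
     (\sum_(i in I) lam i * \prod_k lam2 i (psi k)) ^+ (2 * d).

Variable (F : {set {ffun S -> Sp}}).

Definition prob (E : pred {ffun S -> Sp}) : R :=
  (\sum_(f in F | E f) weight f) / omega F.

Definition fsupp : {set {ffun S -> Sp}} := [set f in F | 0 < weight f].

Variables (T : S -> eqType) (X : forall v : S, {ffun 'I_d * bool -> Sp} -> T v).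

Definition PX (v : S) (x : T v) : R := prob (fun f => X v (restr f v) == x).

Definition suppX (v : S) : seq (T v) :=
  undup [seq X v (restr f v) | f <- enum fsupp].

Definition ev (v : S) (x : T v) : {set {ffun S -> Sp}} :=
  [set f in fsupp | X v (restr f v) == x].

Definition Psi (v : S) (x : T v) : {set {ffun 'I_d * bool -> Sp}} :=
  [set restr (f : {ffun S -> Sp}) v | f in ev x].

Definition Iset (v : S) (x : T v) : {set Sp} := [set (f : {ffun S -> Sp}) v | f in ev x].

End Spin.

(* Main.v *)
Require Import Defs.
From HB Require Import structures.
From mathcomp Require Import all_boot all_order all_algebra.
From mathcomp Require Import finmap.
From mathcomp Require Import reals exp.
From mathcomp Require Import lra ring.
Import Order.TTheory GRing.Theory Num.Theory.
Local Open Scope ring_scope.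
Set Implicit Arguments. Unset Strict Implicit. Unset Printing Implicit Defensive.
Module A.
Local Open Scope ring_scope.

Section ProbA.
Variables (R : realType) (U : finType) (Sp : finType).
Local Notation cfg := {ffun U -> Sp}.
Variables (P : cfg -> R) (D : {set cfg}).
Hypothesis hP : forall f, f \in D -> 0 < P f.
Hypothesis hP1 : \sum_(f in D) P f = 1.

Definition agree (A : {set U}) (f g : cfg) := [forall u in A, f u == g u].

Lemma agree_refl (A : {set U}) (f : cfg) : agree A f f.
Proof. by apply/forall_inP. Qed.
Lemma agree_sym (A : {set U}) (f g : cfg) : agree A f g = agree A g f.
Proof. by apply/forall_inP/forall_inP => H u /H /eqP ->. Qed.
Lemma agree_trans (A : {set U}) (f g h : cfg) : agree A f g -> agree A g h -> agree A f h.
Proof. by move=> /forall_inP H1 /forall_inP H2; apply/forall_inP => u uA; rewrite (eqP (H1 _ uA)) H2. Qed.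
Lemma agree_sub (A B : {set U}) (f g : cfg) : A \subset B -> agree B f g -> agree A f g.
Proof. by move=> /subsetP AB /forall_inP H; apply/forall_inP => u /AB /H. Qed.
Lemma agreeU1 (e : U) (A : {set U}) (f g : cfg) : agree (e |: A) f g = (f e == g e) && agree A f g.
Proof.
apply/forall_inP/andP => [H|[H1 /forall_inP H2] u].
  by split; [apply: H; rewrite setU11 | apply/forall_inP => u uA; apply: H; rewrite setU1r].
by case/setU1P => [->|/H2].
Qed.

Definition pA (A : {set U}) (f : cfg) := \sum_(g in D | agree A f g) P g.

Lemma P_ge0 f : f \in D -> 0 <= P f.
Proof. by move/hP/ltW. Qed.



Lemma pA_ge (A : {set U}) (Q : pred cfg) (f : cfg) : (forall g, g \in D -> Q g -> agree A f g) ->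
  \sum_(g in D | Q g) P g <= pA A f.
Proof.
move=> H; rewrite /pA [X in _ <= X](bigID Q) /=.
rewrite -[X in X <= _]addr0 lerD //.
  by rewrite le_eqVlt; apply/orP; left; apply/eqP; apply: eq_bigl => g;
     case: (boolP (g \in D)) => //= gD; case: (boolP (Q g)) => Qg; rewrite ?andbT ?andbF ?H.
by apply: sumr_ge0 => g /andP[/andP[/P_ge0]]. 
Qed.

Lemma pA_gt0 (A : {set U}) (f : cfg) : f \in D -> 0 < pA A f.
Proof.
move=> fD; rewrite /pA (bigD1 f) /=; last by rewrite fD agree_refl.
by rewrite ltr_pwDl ?hP // sumr_ge0 // => g /andP[/andP[/P_ge0]].
Qed.

Lemma pA_agree (A : {set U}) (f g : cfg) : agree A f g -> pA A f = pA A g.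
Proof.
move=> H; apply: eq_bigl => h; congr (_ && _).
apply/idP/idP => H2; first by apply: agree_trans H2; rewrite agree_sym.
exact: agree_trans H H2.
Qed.

Lemma pA0 (f : cfg) : pA set0 f = 1.
Proof.
rewrite -hP1; apply: eq_bigl => g; rewrite (_ : agree _ _ _ = true) ?andbT //.
by apply/forall_inP => u; rewrite inE.
Qed.

Definition Ex (phi : cfg -> R) := \sum_(f in D) P f * phi f.

Lemma ExD phi psi : Ex (fun f => phi f + psi f) = Ex phi + Ex psi.
Proof. by rewrite /Ex -big_split; apply: eq_bigr => f _; rewrite mulrDr. Qed.
Lemma ExN phi : Ex (fun f => - phi f) = - Ex phi.
Proof. by rewrite /Ex -sumrN; apply: eq_bigr => f _; rewrite mulrN. Qed.
Lemma ExB phi psi : Ex (fun f => phi f - psi f) = Ex phi - Ex psi.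
Proof. by rewrite ExD ExN. Qed.
Lemma ExZ c phi : Ex (fun f => c * phi f) = c * Ex phi.
Proof. by rewrite /Ex mulr_sumr; apply: eq_bigr => f _; rewrite mulrCA. Qed.
Lemma ExC c : Ex (fun => c) = c.
Proof. by rewrite /Ex -mulr_suml hP1 mul1r. Qed.
Lemma Ex_sum (I : Type) (r : seq I) (Q : pred I) (phi : I -> cfg -> R) :
  Ex (fun f => \sum_(i <- r | Q i) phi i f) = \sum_(i <- r | Q i) Ex (phi i).
Proof.
rewrite /Ex exchange_big /=; apply: eq_bigr => f _; by rewrite mulr_sumr.
Qed.
Lemma Ex_le phi psi : (forall f, f \in D -> phi f <= psi f) -> Ex phi <= Ex psi.
Proof. by move=> H; apply: ler_sum => f fD; rewrite ler_wpM2l ?P_ge0 ?H. Qed.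
Lemma Ex_eq phi psi : (forall f, f \in D -> phi f = psi f) -> Ex phi = Ex psi.
Proof. by move=> H; apply: eq_bigr => f fD; rewrite H. Qed.

Lemma ln_le_sub1 (x : R) : 0 < x -> ln x <= x - 1.
Proof.
move=> x0; have := @le_ln1Dx R (x - 1); rewrite [1 + _]addrC subrK; apply.
lra.
Qed.

Lemma gibbs r : (forall f, f \in D -> 0 < r f) -> Ex r <= 1 -> Ex (fun f => ln (r f)) <= 0.
Proof.
move=> rp H; apply: (@le_trans _ _ (Ex (fun f => r f - 1))).
  by apply: Ex_le => f fD; apply: ln_le_sub1; apply: rp.
by rewrite ExB ExC subr_le0.
Qed.

Lemma L1 (Q : pred cfg) (p : cfg -> R) :
  (forall f, f \in D -> Q f -> \sum_(g in D | Q g) P g <= p f) ->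
  \sum_(f in D | Q f) P f / p f <= 1.
Proof.
move=> H; set s := \sum_(g in D | Q g) P g.
case: (boolP [exists f, (f \in D) && Q f]) => [/existsP[f0 /andP[f0D Qf0]]|/existsPn Hn].
  have s0 : 0 < s.
    rewrite /s (bigD1 f0) /=; last by rewrite f0D.
    by rewrite ltr_pwDl ?hP // sumr_ge0 // => g /andP[/andP[/P_ge0]].
  apply: (@le_trans _ _ (\sum_(f in D | Q f) P f / s)).
    apply: ler_sum => f /andP[fD Qf]; rewrite ler_wpM2l ?P_ge0 //.
    by rewrite lef_pV2 ?posrE ?H // (lt_le_trans s0) ?H.
  by rewrite -mulr_suml mulfV ?gt_eqF.
rewrite big1 // => f /andP[fD Qf]; by have := Hn f; rewrite fD Qf.
Qed.

Lemma tower (A : {set U}) (Phi : cfg -> R) :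
  Ex Phi = \sum_(g in D) P g / pA A g * \sum_(f in D | agree A g f) P f * Phi f.
Proof.
transitivity (\sum_(g in D) \sum_(f in D) (if agree A g f then P g / pA A g * (P f * Phi f) else 0)).
  rewrite exchange_big /Ex; apply: eq_bigr => f fD.
  transitivity (P f * Phi f * \sum_(g in D | agree A g f) P g / pA A g).
    rewrite (eq_bigr (fun g => P g / pA A f)); last first.
      by move=> g /andP[_ H]; rewrite (pA_agree H).
    rewrite -mulr_suml.
    have -> : \sum_(i in D | agree A i f) P i = pA A f.
      by apply: eq_bigl => g; rewrite agree_sym.
    by rewrite mulfV ?mulr1 // gt_eqF // pA_gt0.
  rewrite mulr_sumr -big_mkcondr /=; apply: eq_bigr => g _.
  by rewrite mulrC.
apply: eq_bigr => g gD; rewrite mulr_sumr -big_mkcondr /=.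
by [].
Qed.


Lemma ln4 (a b c e : R) : 0 < a -> 0 < b -> 0 < c -> 0 < e ->
  ln (a * b / (c * e)) = ln a + ln b - ln c - ln e.
Proof.
move=> a0 b0 c0 e0.
rewrite ln_div ?posrE ?mulr_gt0 // lnM ?posrE // lnM ?posrE //.
by rewrite opprD addrA.
Qed.

Lemma submod_r (A B : {set U}) (e : U) : A \subset B ->
  Ex (fun f => pA (e |: A) f * pA B f / (pA A f * pA (e |: B) f)) <= 1.
Proof.
move=> AB.
have AeA : A \subset e |: A by apply: subsetUr.
have step1 : forall f, f \in D ->
  P f * (pA (e |: A) f * pA B f / (pA A f * pA (e |: B) f)) =
  \sum_(g in D) (if agree (e |: A) g f then P g / pA A g * (P f * pA B f / pA (e |: B) f) else 0).
  move=> f fD; set a := pA A f; set b := pA B f; set c := pA (e |: B) f.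
  rewrite -big_mkcondr /=.
  rewrite (eq_bigr (fun g => P g * (P f * b / (a * c)))); last first.
    move=> g /andP[_ Hg]; rewrite (pA_agree (agree_sub AeA Hg)) -/a.
    by rewrite invfM; ring.
  rewrite -mulr_suml.
  have -> : \sum_(i in D | agree (e |: A) i f) P i = pA (e |: A) f.
    by apply: eq_bigl => g; rewrite agree_sym.
  by ring.
rewrite /Ex (eq_bigr _ step1) exchange_big /=.
rewrite -hP1; apply: ler_sum => g gD.
rewrite -big_mkcondr /= -mulr_sumr.
suff inner : \sum_(f in D | agree (e |: A) g f) P f * pA B f / pA (e |: B) f <= pA A g.
  rewrite -[X in _ <= X]mulr1 -mulrA ler_wpM2l ?P_ge0 //.
  by rewrite ler_pdivrMl ?pA_gt0 // mulr1.
have -> : \sum_(f in D | agree (e |: A) g f) P f * pA B f / pA (e |: B) f =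
  \sum_(h in D) P h * \sum_(f in D | agree (e |: A) g f && agree B f h) P f / pA (e |: B) f.
  rewrite big_mkcondr /=.
  transitivity (\sum_(f in D) \sum_(h in D)
     (if agree (e |: A) g f && agree B f h then P h * (P f / pA (e |: B) f) else 0)).
    apply: eq_bigr => f _; case: ifP => Hgf; last by rewrite big1.
    rewrite -big_mkcondr /=.
    rewrite -mulr_suml -/(pA B f).
    by rewrite mulrCA mulrA.
  rewrite exchange_big /=; apply: eq_bigr => h _.
  rewrite mulr_sumr big_mkcondr /=; apply: eq_bigr => f _.
  by case: ifP.
rewrite /pA big_mkcondr /=; apply: ler_sum => h hD.
case: ifP => Hgh.
  rewrite -[X in _ <= X]mulr1 ler_wpM2l ?P_ge0 //.
  apply: L1 => f fD /andP[H1 H2]; apply: pA_ge => f' f'D /andP[H1' H2'].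
  rewrite agreeU1; apply/andP; split.
    move: H1 H1'; rewrite !agreeU1 => /andP[/eqP <- _] /andP[/eqP <- _] //.
  by apply: (agree_trans H2); rewrite agree_sym.
rewrite big1 ?mulr0 // => f /andP[_ /andP[H1 H2]].
move: Hgh; rewrite (agree_trans (agree_sub AeA H1) (agree_sub AB H2)) //.
Qed.

Lemma submod (A B : {set U}) (e : U) : A \subset B ->
  Ex (fun f => ln (pA (e |: A) f) + ln (pA B f) - ln (pA A f) - ln (pA (e |: B) f)) <= 0.
Proof.
move=> AB; rewrite (@Ex_eq _ (fun f => ln (pA (e |: A) f * pA B f / (pA A f * pA (e |: B) f)))).
  by apply: gibbs; [move=> f fD; rewrite !(mulr_gt0, invr_gt0, pA_gt0) | apply: submod_r].
by move=> f fD; rewrite ln4 ?pA_gt0.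
Qed.


Lemma L2 (K : finType) (Q : pred cfg) (y : cfg -> K) (p : cfg -> R) (phi : K -> R) :
  (forall k, 0 <= phi k) ->
  (forall f, f \in D -> Q f -> \sum_(g in D | Q g && (y g == y f)) P g <= p f) ->
  \sum_(f in D | Q f) P f * phi (y f) / p f <=
  \sum_(k in [set y f | f in [set f in D | Q f]]) phi k.
Proof.
move=> phi0 H.
rewrite (partition_big y predT) //= [X in _ <= X]big_mkcond /=.
apply: ler_sum => k _.
rewrite (eq_bigr (fun f => phi k * (P f / p f))); last first.
  by move=> f /andP[_ /eqP <-]; rewrite mulrCA mulrA.
rewrite -mulr_sumr; case: ifP => Hk.
  rewrite -[X in _ <= X]mulr1 ler_wpM2l //.
  rewrite (eq_bigl (fun f => (f \in D) && (Q f && (y f == k)))); last first.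
    by move=> f; rewrite andbA.
  apply: L1 => f fD /andP[Qf /eqP yf]; rewrite -yf; exact: H.
rewrite big1 ?mulr0 // => f /andP[/andP[fD Qf] /eqP yf].
by move: Hk; rewrite -yf imset_f // inE fD.
Qed.

Lemma part_seq (T : eqType) (s : seq T) (x : cfg -> T) (F : cfg -> R) :
  uniq s -> (forall f, f \in D -> x f \in s) ->
  \sum_(f in D) F f = \sum_(t <- s) \sum_(f in D | x f == t) F f.
Proof.
move=> us Hs.
rewrite (eq_bigr (fun t => \sum_(f in D) (if x f == t then F f else 0))); last first.
  by move=> t _; rewrite big_mkcondr.
rewrite exchange_big /=; apply: eq_bigr => f fD.
rewrite (bigD1_seq (x f)) ?Hs //= eqxx big1 ?addr0 // => t /negPf.
by rewrite eq_sym => ->.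
Qed.

Definition Hn (A : {set U}) := Ex (fun f => - ln (pA A f)).

Lemma Hn0 : Hn set0 = 0.
Proof. by rewrite /Hn (@Ex_eq _ (fun => 0)) ?ExC // => f _; rewrite pA0 ln1 oppr0. Qed.

Lemma submodH (A B : {set U}) (e : U) : A \subset B ->
  Hn (e |: B) - Hn B <= Hn (e |: A) - Hn A.
Proof.
move=> AB; have := submod e AB.
rewrite !ExB ExD /Hn !ExN; lra.
Qed.

Lemma chainH (s : seq U) (B : {set U}) (N : U -> {set U}) :
  (forall v, v \in s -> N v \subset B) ->
  Hn (B :|: [set x in s]) <= Hn B + \sum_(v <- s) (Hn (v |: N v) - Hn (N v)).
Proof.
elim: s B => [|v s IH] B HN.
  rewrite big_nil addr0 (_ : [set x in [::]] = set0) ?setU0 //.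
have -> : B :|: [set x in v :: s] = (v |: B) :|: [set x in s].
  by apply/setP => x; rewrite !inE; case: (x == v); case: (x \in B); case: (x \in s).
rewrite big_cons; apply: (le_trans (IH _ _)).
  by move=> u us; apply: (subset_trans (HN u _)); rewrite ?subsetUr // inE us orbT.
have := submodH v (HN v (mem_head _ _)); lra.
Qed.

Lemma shearerH (I : finType) (A : I -> {set U}) (c : I -> R) (K : R) (s : seq U) (B : {set U}) :
  (forall i, 0 <= c i) ->
  (forall e, e \in s -> \sum_i c i * (e \in A i)%:R = K) ->
  K * (Hn (B :|: [set x in s]) - Hn B) <=
  \sum_i c i * (Hn (A i :&: (B :|: [set x in s])) - Hn (A i :&: B)).
Proof.
move=> c0; elim: s B => [|e s IH] B HK.
  rewrite (_ : [set x in [::]] = set0) ?setU0 ?subrr ?mulr0; last by apply/setP => x; rewrite !inE.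
  by rewrite big1 // => i _; rewrite subrr mulr0.
have -> : B :|: [set x in e :: s] = (e |: B) :|: [set x in s].
  by apply/setP => x; rewrite !inE; case: (x == e); case: (x \in B); case: (x \in s).
have IH' := IH (e |: B).
have {IH'}IH' := IH' (fun e' he' => HK e' (ltac:(by rewrite inE he' orbT))).
have step : K * (Hn (e |: B) - Hn B) <= \sum_i c i * (Hn (A i :&: (e |: B)) - Hn (A i :&: B)).
  rewrite -(HK e (mem_head _ _)) mulr_suml; apply: ler_sum => i _.
  rewrite -mulrA ler_wpM2l //.
  case: (boolP (e \in A i)) => eA; rewrite /= ?mul1r ?mul0r.
    have -> : A i :&: (e |: B) = e |: (A i :&: B).
      by apply/setP => x; rewrite !inE; case: (boolP (x == e)) => [/eqP->|]; rewrite ?eA.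
    by apply: submodH; apply: subsetIr.
  have -> : A i :&: (e |: B) = A i :&: B.
    apply/setP => x; rewrite !inE; case: (boolP (x == e)) => [/eqP->|] //.
    by rewrite (negPf eA).
  by rewrite subrr.
have -> : \sum_i c i * (Hn (A i :&: (e |: B :|: [set x in s])) - Hn (A i :&: B)) =
  \sum_i c i * (Hn (A i :&: (e |: B :|: [set x in s])) - Hn (A i :&: (e |: B))) +
  \sum_i c i * (Hn (A i :&: (e |: B)) - Hn (A i :&: B)).
  rewrite -big_split; apply: eq_bigr => i _.
  by rewrite /=; ring.
lra.
Qed.

End ProbA.

End A.
Import A.

Lemma dvdz2S (z : int) : (2 %| z + 1)%Z = ~~ (2 %| z)%Z.
Proof.
case: z => n.
  by rewrite -PoszD addn1 !dvdzE /= !dvdn2 /= negbK.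
case: n => [|n]; first by [].
rewrite NegzE (_ : - (Posz n.+2) + 1 = - Posz n.+1); last first.
  by rewrite -addn1 PoszD opprD addrNK.
rewrite !dvdzE !abszN /=.
by rewrite -[addn 1 1]/2%N !dvdn2 /= !negbK.
Qed.
Lemma dvdz2B (z : int) : (2 %| z - 1)%Z = ~~ (2 %| z)%Z.
Proof. by rewrite -{2}(subrK 1 z) dvdz2S negbK. Qed.

Section Lattice.
Variable d : nat.

Lemma sum_nbr (u : vtx d) k :
  \sum_j nbr u k j = \sum_j u j + (if k.2 then 1 else -1).
Proof.
rewrite (eq_bigr (fun j => u j + (if j == k.1 then (if k.2 then 1 else -1) else 0))); last first.
  by move=> j _; rewrite ffunE.
by rewrite big_split /= -big_mkcond /= big_pred1_eq.
Qed.

Lemma even_nbr (u : vtx d) k : evenv (nbr u k) = ~~ evenv u.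
Proof. by rewrite /evenv sum_nbr; case: k.2; rewrite ?dvdz2S ?dvdz2B. Qed.

Lemma nbr_inj (u : vtx d) : injective (nbr u).
Proof.
move=> [i b] [j c] /ffunP /(_ i); rewrite !ffunE eqxx /= => /addrI.
case: (eqVneq i j) => [<-|ij].
  by case: b; case: c.
by case: b.
Qed.

Lemma nbr_nbr (u : vtx d) i b : nbr (nbr u (i, b)) (i, ~~ b) = u.
Proof.
apply/ffunP => j; rewrite !ffunE /=; case: (j == i); last by rewrite !addr0.
by case: b => /=; rewrite -addrA ?subrr ?addNr addr0.
Qed.

Lemma adj_sym (u w : vtx d) : [exists k, w == nbr u k] -> [exists k, u == nbr w k].
Proof.
case/existsP => [[i b] /eqP ->]; apply/existsP; exists (i, ~~ b).
by rewrite nbr_nbr.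
Qed.

End Lattice.


Section Main.
Variables (R : realType) (Sp : finType) (lam : Sp -> R) (lam2 : Sp -> Sp -> R) (d : nat).
Hypothesis hd : (0 < d)%N.
Hypothesis hlam : forall i, 0 < lam i.
Hypothesis hlam2 : forall i j, 0 <= lam2 i j.
Hypothesis hsym : forall i j, lam2 i j = lam2 j i.
Variable S : {fset vtx d}.
Hypothesis hS : even_set S.

Local Notation cfg := {ffun S -> Sp}.

Definition Nset (v : S) : {set S} := [set w : S | [exists k, val w == nbr (val v) k]].
Definition nk (v : S) (k : 'I_d * bool) : S := odflt v (insub (nbr (val v) k)).
Definition oddS (v : S) := ~~ evenv (val v).

Lemma odd_in (v : S) k : oddS v -> nbr (val v) k \in S.
Proof.
move=> ov; apply/negPn/negP => H; move/negP: ov; apply; apply: hS; first exact: fsvalP.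
by apply/existsP; exists k.
Qed.

Lemma val_nk (v : S) k : nbr (val v) k \in S -> val (nk v k) = nbr (val v) k.
Proof. by move=> H; rewrite /nk insubT. Qed.

Lemma restr_nk (f : cfg) v k : restr f v k = f (nk v k).
Proof. by rewrite /restr ffunE /nk; case: insub. Qed.

Lemma nk_inj (v : S) : {in [set k | nbr (val v) k \in S] &, injective (nk v)}.
Proof.
move=> k1 k2; rewrite !inE => h1 h2 /(congr1 val); rewrite !val_nk //.
exact: nbr_inj.
Qed.

Lemma Nset_img (v : S) : Nset v = [set nk v k | k in [set k | nbr (val v) k \in S]].
Proof.
apply/setP => w; rewrite inE; apply/existsP/imsetP => [[k /eqP wk]|[k kin ->]].
  exists k; first by rewrite inE -wk; apply: fsvalP.
  by apply: val_inj; rewrite val_nk // -wk; apply: fsvalP.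
by exists k; rewrite val_nk //; move: kin; rewrite inE.
Qed.

Lemma card_Nset (v : S) : #|Nset v| = #|[set k | nbr (val v) k \in S]|.
Proof. by rewrite Nset_img card_in_imset //; apply: nk_inj. Qed.

Lemma Nset_odd (v : S) : oddS v -> Nset v = [set nk v k | k : 'I_d * bool].
Proof.
move=> ov; rewrite Nset_img; apply/setP => w.
by apply/imsetP/imsetP => [[k _ ->]|[k _ ->]]; exists k; rewrite ?inE ?odd_in.
Qed.

Lemma nk_inj_odd (v : S) : oddS v -> injective (nk v).
Proof.
move=> ov k1 k2 /(congr1 val); rewrite !val_nk ?odd_in //; exact: nbr_inj.
Qed.

Lemma Nset_sym (u w : S) : (w \in Nset u) = (u \in Nset w).
Proof. by rewrite !inE; apply/idP/idP => /adj_sym. Qed.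

Lemma Nset_par (u w : S) : w \in Nset u -> evenv (val w) = ~~ evenv (val u).
Proof. by rewrite inE => /existsP[k /eqP ->]; rewrite even_nbr. Qed.

Definition Aw (w : S) : {set S} := if evenv (val w) then [set w] else Nset w.
Definition cw (w : S) : R := if evenv (val w) then (n_out S (val w))%:R else 1.

Lemma cw_ge0 w : 0 <= cw w.
Proof. by rewrite /cw; case: ifP => _; rewrite ?ler0n ?ler01. Qed.

Lemma nout_Nset (e : S) : (n_out S (val e) + #|Nset e| = 2 * d)%N.
Proof.
rewrite card_Nset /n_out addnC.
have -> : [set k | nbr (val e) k \notin S] = ~: [set k | nbr (val e) k \in S].
  by apply/setP => k; rewrite !inE.
by rewrite cardsC card_prod card_ord card_bool mulnC.
Qed.

Lemma cnt (e : S) : \sum_w cw w * (e \in Aw w)%:R = if evenv (val e) then (2 * d)%:R else 0.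
Proof.
rewrite (bigID (fun w => evenv (val w))) /=.
rewrite (eq_bigr (fun w => (n_out S (val w))%:R * (w == e)%:R)); last first.
  by move=> w ew; rewrite /cw /Aw ew inE eq_sym.
rewrite [X in _ + X](eq_bigr (fun w => (e \in Nset w)%:R)); last first.
  by move=> w /negPf ew; rewrite /cw /Aw ew mul1r.
case: ifP => ee.
  rewrite (bigD1 e) //= eqxx mulr1 big1 ?addr0; last first.
    by move=> w /andP[_ /negPf ->]; rewrite mulr0.
  rewrite big_mkcond /= (eq_bigr (fun w => if w \in Nset e then 1 else 0)); last first.
    move=> w _; case: (boolP (w \in Nset e)) => H.
      by rewrite (Nset_par H) ee /= -Nset_sym H.
    by case: ifP => // _; rewrite -Nset_sym (negPf H).
  by rewrite -big_mkcond /= sumr_const -natrD nout_Nset.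
rewrite big1 ?add0r; last first.
  by move=> w ew; case: (eqVneq w e) => [wE|]; [move: ew; rewrite wE ee | rewrite mulr0].
rewrite big1 // => w ow; case: (boolP (e \in Nset w)) => // H.
by move: (Nset_par H); rewrite ee (negPf ow).
Qed.

Definition gtl (psi : {ffun 'I_d * bool -> Sp}) (i : Sp) : R := lam i * \prod_k lam2 i (psi k).

Lemma edge_swap (F2 : S -> S -> R) :
  \prod_(u : S | evenv (val u)) \prod_(w : S | [exists k, val w == nbr (val u) k]) F2 u w =
  \prod_(w : S | oddS w) \prod_(u : S | u \in Nset w) F2 u w.
Proof.
transitivity (\prod_(u : S) \prod_(w : S) (if evenv (val u) && (w \in Nset u) then F2 u w else 1)).
  rewrite big_mkcond; apply: eq_bigr => u _; case: ifP => eu /=.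
    by rewrite big_mkcond; apply: eq_bigr => w _; rewrite inE.
  by rewrite big1.
transitivity (\prod_(w : S) \prod_(u : S) (if oddS w && (u \in Nset w) then F2 u w else 1)); last first.
  rewrite [RHS]big_mkcond; apply: eq_bigr => w _; case: ifP => ow /=.
    by rewrite [RHS]big_mkcond.
  by rewrite big1_eq.
rewrite exchange_big; apply: eq_bigr => w _; apply: eq_bigr => u _.
congr (if _ then _ else _).
rewrite Nset_sym; case: (boolP (u \in Nset w)) => H; rewrite ?andbF ?andbT //.
by rewrite /oddS (Nset_par H).
Qed.

Lemma prod_Nset (w : S) (h : S -> R) : oddS w ->
  \prod_(u : S | u \in Nset w) h u = \prod_k h (nk w k).
Proof.
move=> ow; rewrite Nset_odd // big_imset /=; last by move=> k1 k2 _ _; apply: nk_inj_odd.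
by apply: eq_bigl => k; rewrite inE.
Qed.

Lemma sum_Nset (w : S) (h : S -> R) : oddS w ->
  \sum_(u : S | u \in Nset w) h u = \sum_k h (nk w k).
Proof.
move=> ow; rewrite Nset_odd // big_imset /=; last by move=> k1 k2 _ _; apply: nk_inj_odd.
by apply: eq_bigl => k; rewrite inE.
Qed.

Lemma weight_dec (f : cfg) : weight lam lam2 f =
  (\prod_(u : S | evenv (val u)) lam (f u)) * \prod_(v : S | oddS v) gtl (restr f v) (f v).
Proof.
rewrite /weight (bigID (fun u => evenv (val u))) /= -mulrA; congr (_ * _).
rewrite edge_swap -big_split /=; apply: eq_bigr => w ow.
rewrite /gtl prod_Nset //; congr (_ * _); apply: eq_bigr => k _.
by rewrite hsym restr_nk.
Qed.

Lemma gtl_ge0 psi i : 0 <= gtl psi i.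
Proof. by rewrite /gtl mulr_ge0 ?(ltW (hlam _)) //; apply: prodr_ge0 => k _. Qed.

Lemma weight_ge0 (f : cfg) : 0 <= weight lam lam2 f.
Proof.
rewrite /weight mulr_ge0 //; apply: prodr_ge0 => *; rewrite ?(ltW (hlam _)) //.
by apply: prodr_ge0 => *.
Qed.

Variables (Su : S -> {set Sp}) (F : {set cfg}).
Hypothesis hF : forall f, f \in F -> forall u : S, has_out_nbr S (val u) -> f u \in Su u.
Hypothesis hpos : 0 < omega lam lam2 F.
Variables (T : S -> eqType) (X : forall v : S, {ffun 'I_d * bool -> Sp} -> T v).

Local Notation w := (weight lam lam2).
Local Notation Om := (omega lam lam2 F).
Definition Pr (f : cfg) := w f / Om.
Local Notation D := (fsupp lam lam2 F).

Lemma hP f : f \in D -> 0 < Pr f.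
Proof. by rewrite inE => /andP[_ H]; rewrite /Pr divr_gt0. Qed.

Lemma sum_FD (E : pred cfg) : \sum_(f in F | E f) w f = \sum_(f in D | E f) w f.
Proof.
rewrite (bigID (fun f => 0 < w f)) /= [X in _ + X]big1 ?addr0.
  by apply: eq_bigl => f; rewrite inE -andbA [E f && _]andbC andbA.
move=> f /andP[_ H]; apply/eqP; rewrite eq_le weight_ge0 andbT.
by rewrite leNgt.
Qed.

Lemma hP1 : \sum_(f in D) Pr f = 1.
Proof.
rewrite /Pr -mulr_suml.
have E : Om = \sum_(f in D) w f.
  rewrite /omega -(eq_bigl _ _ (fun f => andbT (f \in F))) (sum_FD predT).
  by apply: eq_bigl => f; rewrite andbT.
by rewrite -E mulfV // gt_eqF.
Qed.

Lemma PX_sum (v : S) (x : T v) :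
  PX lam lam2 F X x = \sum_(f in D | X v (restr f v) == x) Pr f.
Proof. by rewrite /PX /prob sum_FD /Pr mulr_suml. Qed.

Lemma gtl_gt0 (f : cfg) (v : S) : f \in D -> oddS v -> 0 < gtl (restr f v) (f v).
Proof.
move=> fD ov; rewrite lt_def gtl_ge0 andbT.
move: fD; rewrite inE => /andP[_]; rewrite weight_dec => /gt_eqF /negbT.
rewrite mulf_eq0 negb_or => /andP[_]; rewrite prodf_seq_neq0 => /allP /(_ v).
by rewrite mem_index_enum ov => /(_ isT).
Qed.

Lemma sum_sub_le (K : finType) (A B : {set K}) (phi : K -> R) :
  A \subset B -> (forall k, 0 <= phi k) ->
  \sum_(k in A) phi k <= \sum_(k in B) phi k.
Proof.
move=> /subsetP AB phi0; rewrite [X in _ <= X](bigID (fun k => k \in A)) /=.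
rewrite -[X in X <= _]addr0 lerD ?sumr_ge0 //.
rewrite le_eqVlt; apply/orP; left; apply/eqP; apply: eq_bigl => k.
by case: (boolP (k \in A)) => kA; rewrite ?andbT ?andbF ?AB.
Qed.

Local Notation Ex := (Ex Pr D).
Local Notation pA := (pA Pr D).

Lemma agree_N_restr (v : S) (f g : cfg) : oddS v ->
  agree (Nset v) f g = (restr f v == restr g v).
Proof.
move=> ov; apply/forall_inP/eqP => [H|H u].
  apply/ffunP => k; rewrite !restr_nk; apply/eqP/H.
  by rewrite Nset_odd // imset_f.
rewrite Nset_odd // => /imsetP[k _ ->].
by have := congr1 (fun h : {ffun 'I_d * bool -> Sp} => h k) H; rewrite /= !restr_nk => ->.
Qed.

Definition xf (v : S) (f : cfg) : T v := X v (restr f v).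
Definition Gt (v : S) (x : T v) (psi : {ffun 'I_d * bool -> Sp}) : R :=
  \sum_(i in Iset lam lam2 F X x) gtl psi i.
Definition lamps (psi : {ffun 'I_d * bool -> Sp}) : R := \prod_k lam (psi k).
Definition Zx (v : S) (x : T v) : R := Zpart lam lam2 (Psi lam lam2 F X x) (Iset lam lam2 F X x).
Definition PXx (v : S) (x : T v) : R := PX lam lam2 F X x.

Lemma Zx_E (v : S) (x : T v) :
  Zx x = \sum_(psi in Psi lam lam2 F X x) lamps psi * Gt x psi ^+ (2 * d).
Proof. by []. Qed.

Lemma in_ev (v : S) f : f \in D -> f \in ev lam lam2 F X (xf v f).
Proof. by move=> fD; rewrite inE fD eqxx. Qed.

Lemma lamps_gt0 psi : 0 < lamps psi.
Proof. by apply: prodr_gt0 => k _. Qed.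

Lemma Gt_gt0 (v : S) f : f \in D -> oddS v -> 0 < Gt (xf v f) (restr f v).
Proof.
move=> fD ov; rewrite /Gt (bigD1 (f v)) /=; last by apply: imset_f; apply: in_ev.
by rewrite ltr_pwDl ?gtl_gt0 // sumr_ge0 // => i _; apply: gtl_ge0.
Qed.

Lemma Zx_gt0 (v : S) f : f \in D -> oddS v -> 0 < Zx (xf v f).
Proof.
move=> fD ov; rewrite Zx_E (bigD1 (restr f v)) /=; last by apply: imset_f; apply: in_ev.
rewrite ltr_pwDl ?mulr_gt0 ?exprn_gt0 ?lamps_gt0 ?Gt_gt0 //.
apply: sumr_ge0 => psi _; rewrite mulr_ge0 ?exprn_ge0 ?(ltW (lamps_gt0 _)) //.
by apply: sumr_ge0 => i _; apply: gtl_ge0.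
Qed.

Lemma PXx_gt0 (v : S) f : f \in D -> 0 < PXx (xf v f).
Proof.
move=> fD; rewrite /PXx PX_sum (bigD1 f) /=; last by rewrite fD eqxx.
by rewrite ltr_pwDl ?hP // sumr_ge0 // => g /andP[/andP[gD _] _]; rewrite ltW ?hP.
Qed.

Lemma suppX_uniq (v : S) : uniq (suppX lam lam2 F X v).
Proof. exact: undup_uniq. Qed.

Lemma suppX_mem (v : S) f : f \in D -> xf v f \in suppX lam lam2 F X v.
Proof. by move=> fD; rewrite mem_undup; apply: map_f; rewrite mem_enum. Qed.

Lemma suppX_inv (v : S) (x : T v) : x \in suppX lam lam2 F X v -> exists2 f, f \in D & xf v f = x.
Proof. by rewrite mem_undup => /mapP[f]; rewrite mem_enum => fD ->; exists f. Qed.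

Lemma PXx_ge0 (v : S) (x : T v) : 0 <= PXx x.
Proof. by rewrite /PXx PX_sum sumr_ge0 // => g /andP[gD _]; rewrite ltW ?hP. Qed.

Lemma PXx_sum1 (v : S) : \sum_(x <- suppX lam lam2 F X v) PXx x = 1.
Proof.
rewrite (eq_bigr (fun x => \sum_(f in D | xf v f == x) Pr f)); last first.
  by move=> x _; rewrite /PXx PX_sum.
by rewrite -(part_seq _ (suppX_uniq v) (@suppX_mem v)) hP1.
Qed.

Lemma claimA (v : S) : oddS v ->
  Ex (fun f => ln (lamps (restr f v) * Gt (xf v f) (restr f v) ^+ (2 * d) * PXx (xf v f)
                   / (Zx (xf v f) * pA (Nset v) f))) <= 0.
Proof.
move=> ov; apply: (gibbs hP hP1).
  move=> f fD; apply: divr_gt0; last by apply: mulr_gt0; [exact: Zx_gt0 | exact: (pA_gt0 hP)].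
  by rewrite mulr_gt0 ?exprn_gt0 ?lamps_gt0 ?PXx_gt0 // mulr_gt0 ?exprn_gt0 ?lamps_gt0 ?Gt_gt0.
rewrite /Ex (part_seq _ (suppX_uniq v) (@suppX_mem v)) -(PXx_sum1 v).
apply: ler_sum => x _.
case: (boolP [exists f, (f \in D) && (xf v f == x)]) => [/existsP[f0 /andP[f0D /eqP hx]]|/existsPn Hn]; last first.
  rewrite big1 ?PXx_ge0 // => f /andP[fD xfx].
  by have := Hn f; rewrite fD xfx.
rewrite (eq_bigr (fun f => PXx x / Zx x * (Pr f * (lamps (restr f v) * Gt x (restr f v) ^+ (2 * d)) / pA (Nset v) f))); last first.
  move=> f /andP[_ /eqP ->]; rewrite invfM; ring.
rewrite -mulr_sumr.
have Z0 : 0 < Zx x by rewrite -hx; apply: Zx_gt0.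
rewrite -[X in _ <= X]mulr1 -(mulVf (negbT (gt_eqF Z0))) mulrA ler_wpM2l //.
  by rewrite divr_ge0 ?PXx_ge0 ?ltW.
have L := L2 hP (phi := fun psi => lamps psi * Gt x psi ^+ (2 * d)) (Q := fun f => xf v f == x)
  (y := fun f => restr f v) (p := pA (Nset v)).
apply: le_trans (L _ _) _.
- by move=> psi; rewrite mulr_ge0 ?exprn_ge0 ?(ltW (lamps_gt0 _)) // sumr_ge0 // => i _; apply: gtl_ge0.
- move=> f fD Qf; apply: (pA_ge hP) => g gD /andP[_ /eqP H].
  by rewrite agree_N_restr // H.
by rewrite Zx_E.
Qed.

Lemma claimB (v : S) : oddS v ->
  Ex (fun f => ln (gtl (restr f v) (f v) * pA (Nset v) f
                   / (Gt (xf v f) (restr f v) * pA (v |: Nset v) f))) <= 0.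
Proof.
move=> ov; apply: (gibbs hP hP1).
  move=> f fD; apply: divr_gt0; last by apply: mulr_gt0; [exact: Gt_gt0 | exact: (pA_gt0 hP)].
  by rewrite mulr_gt0 ?gtl_gt0 // (pA_gt0 hP).
rewrite (tower hP (Nset v)) -hP1; apply: ler_sum => g gD.
set pg := pA (Nset v) g; set Gg := Gt (xf v g) (restr g v).
have pg0 : 0 < pg by apply: (pA_gt0 hP).
have Gg0 : 0 < Gg by apply: Gt_gt0.
rewrite (eq_bigr (fun f => pg / Gg * (Pr f * gtl (restr g v) (f v) / pA (v |: Nset v) f))); last first.
  move=> f /andP[fD Hgf].
  have Hr : restr f v = restr g v by apply/eqP; rewrite -agree_N_restr // agree_sym.
  have Hp : pA (Nset v) f = pg by apply: pA_agree; rewrite agree_sym.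
  rewrite /xf Hr Hp -/(xf v g) -/Gg invfM; ring.
rewrite -mulr_sumr.
suff HS : \sum_(i in D | agree (Nset v) g i) Pr i * gtl (restr g v) (i v) / pA (v |: Nset v) i <= Gg.
  apply: (@le_trans _ _ (Pr g / pg * (pg / Gg * Gg))); last first.
    by rewrite divfK ?(negbT (gt_eqF Gg0)) // divfK // (negbT (gt_eqF pg0)).
  have Pg0 : 0 <= Pr g / pg by rewrite divr_ge0 // ltW // hP.
  have Q0 : 0 <= pg / Gg by rewrite divr_ge0 // ltW.
  by rewrite ler_wpM2l // ler_wpM2l.
have L := L2 hP (phi := gtl (restr g v)) (Q := fun f => agree (Nset v) g f)
  (y := fun f => f v) (p := pA (v |: Nset v)).
apply: le_trans (L _ _) _.
- by move=> i; apply: gtl_ge0.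
- move=> f fD Qf; apply: (pA_ge hP) => h hD /andP[Qh /eqP H].
  rewrite agreeU1 H eqxx /=.
  by apply: agree_trans Qh; rewrite agree_sym.
apply: sum_sub_le; last by move=> i; apply: gtl_ge0.
apply/subsetP => i /imsetP[f]; rewrite inE => /andP[fD Hgf] ->.
apply: imset_f; rewrite inE fD /=.
have Hr : restr f v = restr g v by apply/eqP; rewrite -agree_N_restr // agree_sym.
by rewrite Hr.
Qed.

Lemma ln5 (a b c z p : R) (n : nat) : 0 < a -> 0 < b -> 0 < c -> 0 < z -> 0 < p ->
  ln (a * b ^+ n * c / (z * p)) = ln a + n%:R * ln b + ln c - ln z - ln p.
Proof.
move=> a0 b0 c0 z0 p0.
rewrite ln_div ?posrE ?mulr_gt0 ?exprn_gt0 // !lnM ?posrE ?mulr_gt0 ?exprn_gt0 //.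
by rewrite lnXn // mulr_natl opprD addrA.
Qed.

Local Notation K := ((2 * d)%:R : R).

Lemma local (v : S) : oddS v ->
  Ex (fun f => ln (lamps (restr f v))) + K * Ex (fun f => ln (gtl (restr f v) (f v)))
  - Ex (fun f => ln (pA (Nset v) f))
  + K * (Ex (fun f => ln (pA (Nset v) f)) - Ex (fun f => ln (pA (v |: Nset v) f)))
  <= Ex (fun f => ln (Zx (xf v f)) - ln (PXx (xf v f))).
Proof.
move=> ov.
have A := claimA ov.
rewrite (@Ex_eq _ _ _ Pr D _ (fun f => ln (lamps (restr f v)) + K * ln (Gt (xf v f) (restr f v))
   + ln (PXx (xf v f)) - ln (Zx (xf v f)) - ln (pA (Nset v) f))) in A; last first.
  move=> f fD; rewrite ln5 ?lamps_gt0 ?Gt_gt0 ?PXx_gt0 ?Zx_gt0 ?(pA_gt0 hP) //.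
have B := claimB ov.
rewrite (@Ex_eq _ _ _ Pr D _ (fun f => ln (gtl (restr f v) (f v)) + ln (pA (Nset v) f)
   - ln (Gt (xf v f) (restr f v)) - ln (pA (v |: Nset v) f))) in B; last first.
  by move=> f fD; rewrite ln4 ?gtl_gt0 ?Gt_gt0 ?(pA_gt0 hP).
rewrite !ExB !ExD ExZ in A.
rewrite !ExB !ExD in B.
rewrite ExB.
have K0 : 0 <= K by rewrite ler0n.
have B' := ler_wpM2l K0 B.
rewrite mulr0 !mulrBr !mulrDr in B'.
rewrite mulrBr.
lra.
Qed.

Lemma D_nonempty : exists f, f \in D.
Proof.
case: (boolP [exists f, f \in D]) => [/existsP[f fD]|/existsPn H]; first by exists f.
by move: hP1; rewrite big1 // => [/eqP|f fD]; [rewrite eq_sym oner_eq0 | move: (H f); rewrite fD].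
Qed.

Lemma lamI_gt0 (u : S) : has_out_nbr S (val u) -> 0 < lamI lam (Su u).
Proof.
move=> hu; case: D_nonempty => f fD.
have fF : f \in F by move: fD; rewrite inE => /andP[].
rewrite /lamI (bigD1 (f u)) ?hF //= ltr_pwDl // sumr_ge0 // => i _.
by rewrite ltW.
Qed.

Lemma boundary (u : S) : has_out_nbr S (val u) ->
  Ex (fun f => ln (lam (f u)) - ln (pA [set u] f)) <= ln (lamI lam (Su u)).
Proof.
move=> hu; have L0 := lamI_gt0 hu.
have G : Ex (fun f => ln (lam (f u) / (lamI lam (Su u) * pA [set u] f))) <= 0.
  apply: (gibbs hP hP1).
    by move=> f fD; rewrite divr_gt0 // mulr_gt0 // (pA_gt0 hP).
  have L := L2 hP (phi := fun i => lam i / lamI lam (Su u)) (Q := fun f => true)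
    (y := fun f => f u) (p := pA [set u]).
  have -> : Ex (fun f => lam (f u) / (lamI lam (Su u) * pA [set u] f)) =
     \sum_(f in D | true) Pr f * (lam (f u) / lamI lam (Su u)) / pA [set u] f.
    rewrite /Ex; under [RHS]eq_bigl do rewrite andbT.
    by apply: eq_bigr => f _; rewrite invfM; ring.
  apply: le_trans (L _ _) _.
  - by move=> i; rewrite divr_ge0 ?ltW.
  - move=> f fD _; apply: (pA_ge hP) => g gD /eqP H.
    by apply/forall_inP => x; rewrite inE => /eqP ->; rewrite H.
  apply: (@le_trans _ _ (\sum_(i in Su u) lam i / lamI lam (Su u))).
    apply: sum_sub_le; last by move=> i; rewrite divr_ge0 ?ltW.
    apply/subsetP => i /imsetP[f]; rewrite inE => /andP[fD _] ->.
    by apply: hF => //; move: fD; rewrite inE => /andP[].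
  by rewrite -mulr_suml mulfV // gt_eqF.
rewrite (@Ex_eq _ _ _ Pr D _ (fun f => ln (lam (f u)) - ln (pA [set u] f) - ln (lamI lam (Su u)))) in G; last first.
  move=> f fD; rewrite ln_div ?posrE ?mulr_gt0 ?(pA_gt0 hP) // lnM ?posrE ?(pA_gt0 hP) //.
  by ring.
rewrite ExB; rewrite !ExB ExC in G.
by rewrite -subr_le0.
exact: hP1.
Qed.

Lemma ln_prod (I : Type) (r : seq I) (Pp : pred I) (G : I -> R) :
  (forall i, Pp i -> 0 < G i) -> ln (\prod_(i <- r | Pp i) G i) = \sum_(i <- r | Pp i) ln (G i).
Proof.
move=> G0.
suff : 0 < \prod_(i <- r | Pp i) G i /\ ln (\prod_(i <- r | Pp i) G i) = \sum_(i <- r | Pp i) ln (G i).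
  by case.
apply: (big_rec2 (fun a b => 0 < b /\ ln b = a)); first by rewrite ln1.
move=> i a b Pi [b0 <-]; split; first by rewrite mulr_gt0 ?G0.
by rewrite lnM ?posrE ?G0.
Qed.

Lemma pA_setT (f : cfg) : f \in D -> pA setT f = Pr f.
Proof.
move=> fD; rewrite /A.pA (bigD1 f) /=; last by rewrite fD agree_refl.
rewrite big1 ?addr0 // => g /andP[/andP[_ H] gf].
have : f = g by apply/ffunP => u; apply/eqP; move/forall_inP: H; apply; rewrite inE.
by move=> fg; move: gf; rewrite fg eqxx.
Qed.

Lemma ln_w (f : cfg) : f \in D -> ln (w f) =
  \sum_(u : S | evenv (val u)) ln (lam (f u)) + \sum_(v : S | oddS v) ln (gtl (restr f v) (f v)).
Proof.
move=> fD; rewrite weight_dec lnM ?posrE; last 2 first.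
- by apply: prodr_gt0 => u _.
- by apply: prodr_gt0 => v ov; apply: gtl_gt0.
by rewrite !ln_prod // => v ov; apply: gtl_gt0.
Qed.

Lemma lnOm (f : cfg) : f \in D -> ln Om = ln (w f) - ln (pA setT f).
Proof.
move=> fD; have w0 : 0 < w f by move: fD; rewrite inE => /andP[].
rewrite pA_setT // /Pr ln_div ?posrE //; ring.
Qed.

Definition Ev : {set S} := [set u : S | evenv (val u)].

Lemma Aw_sub (w0 : S) : Aw w0 \subset Ev.
Proof.
rewrite /Aw; case: ifP => ew; apply/subsetP => u; rewrite !inE.
  by move/eqP ->.
move=> H; have : u \in Nset w0 by rewrite inE.
by move/Nset_par ->; rewrite ew.
Qed.

Lemma count_sum (phi : S -> R) :
  \sum_w0 cw w0 * \sum_(u in Aw w0) phi u = K * \sum_(u | evenv (val u)) phi u.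
Proof.
transitivity (\sum_u phi u * \sum_w0 cw w0 * (u \in Aw w0)%:R).
  rewrite (eq_bigr (fun w0 => \sum_u cw w0 * ((u \in Aw w0)%:R * phi u))); last first.
    move=> w0 _; rewrite mulr_sumr big_mkcond /=; apply: eq_bigr => u _.
    by case: (u \in Aw w0); rewrite ?mul1r ?mul0r ?mulr0.
  rewrite exchange_big /=; apply: eq_bigr => u _; rewrite mulr_sumr.
  by apply: eq_bigr => w0 _; ring.
rewrite [RHS]mulr_sumr [RHS]big_mkcond /=; apply: eq_bigr => u _.
by rewrite cnt; case: ifP => _; rewrite ?mulr0 // mulrC.
Qed.

Lemma split_cw (G : S -> R) :
  \sum_w0 cw w0 * G w0 =
  \sum_(u | evenv (val u)) (n_out S (val u))%:R * G u + \sum_(v | oddS v) G v.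
Proof.
rewrite (bigID (fun u => evenv (val u))) /=; congr (_ + _).
  by apply: eq_bigr => u eu; rewrite /cw eu.
by apply: eq_bigr => v ov; rewrite /cw (negPf ov) mul1r.
Qed.

Lemma Aw_even (u : S) : evenv (val u) -> Aw u = [set u].
Proof. by rewrite /Aw => ->. Qed.
Lemma Aw_odd (v : S) : oddS v -> Aw v = Nset v.
Proof. by rewrite /Aw => /negPf ->. Qed.

Lemma T1_eq (v : S) : oddS v ->
  \sum_(x <- suppX lam lam2 F X v) PXx x * ln (Zx x / PXx x) =
  Ex (fun f => ln (Zx (xf v f)) - ln (PXx (xf v f))).
Proof.
move=> ov; rewrite /A.Ex (part_seq _ (suppX_uniq v) (@suppX_mem v)).
apply: eq_big_seq => x xs.
rewrite (eq_bigr (fun f => Pr f * (ln (Zx x) - ln (PXx x)))); last by move=> f /andP[_ /eqP ->].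
rewrite -mulr_suml -/(xf v) -(PX_sum x) -/(PXx x).
have [f fD hx] := suppX_inv xs.
by rewrite ln_div // posrE -hx ?Zx_gt0 ?PXx_gt0.
Qed.

Lemma T2_bound :
  \sum_(u | evenv (val u)) (n_out S (val u))%:R *
     (Ex (fun f => ln (lam (f u))) - Ex (fun f => ln (pA [set u] f)))
  <= \sum_(u | has_out_nbr S (val u)) (n_out S (val u))%:R * ln (lamI lam (Su u)).
Proof.
rewrite (bigID (fun u => has_out_nbr S (val u))) /= [X in _ + X]big1 ?addr0; last first.
  move=> u /andP[_ H].
  have -> : n_out S (val u) = 0%N.
    rewrite /n_out (_ : [set k | nbr (val u) k \notin S] = set0) ?cards0 //.
    apply/setP => k; rewrite !inE; apply/negbTE.
    by move/existsPn: H => /(_ k).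
  by rewrite mul0r.
rewrite (eq_bigl (fun u => has_out_nbr S (val u))); last first.
  move=> u; apply/andP/idP => [[] //|H]; split => //.
  by apply: hS => //; apply: fsvalP.
apply: ler_sum => u hu; rewrite ler_wpM2l ?ler0n //.
by rewrite -ExB; apply: boundary.
Qed.

Local Notation Hn := (Hn Pr D).
Definition Od : {set S} := [set v : S | oddS v].

Lemma shear : K * Hn Ev <=
  \sum_(u | evenv (val u)) (n_out S (val u))%:R * Hn [set u] + \sum_(v | oddS v) Hn (Nset v).
Proof.
have H := shearerH hP hP1 (A := Aw) (c := cw) (K := K) (s := enum Ev) set0 cw_ge0.
have HEv : set0 :|: [set x in enum Ev] = Ev.
  by apply/setP => x; rewrite !inE mem_enum inE.
rewrite HEv (Hn0 hP1) subr0 in H.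
rewrite (eq_bigr (fun w0 => cw w0 * Hn (Aw w0))) in H; last first.
  by move=> w0 _; rewrite setI0 (Hn0 hP1) subr0 (setIidPl (Aw_sub w0)).
rewrite split_cw in H.
rewrite (eq_bigr (fun u => (n_out S (val u))%:R * Hn [set u])) in H; last first.
  by move=> u eu; rewrite Aw_even.
rewrite [X in _ <= _ + X](eq_bigr (fun v => Hn (Nset v))) in H; last first.
  by move=> v ov; rewrite Aw_odd.
apply: H => e; rewrite mem_enum inE => ee.
by rewrite cnt ee.
Qed.

Lemma chain : Hn setT <= Hn Ev + \sum_(v | oddS v) (Hn (v |: Nset v) - Hn (Nset v)).
Proof.
have H := chainH hP hP1 (s := enum Od) (B := Ev) (N := Nset).
have HT : Ev :|: [set x in enum Od] = setT.
  by apply/setP => x; rewrite !inE mem_enum !inE /oddS; case: evenv.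
rewrite HT big_enum /= in H.
rewrite (eq_bigl (fun v => v \in Od)); last by move=> v; rewrite inE.
apply: H => v; rewrite mem_enum inE => ov.
apply/subsetP => u /Nset_par; rewrite inE => ->; exact: ov.
Qed.

Lemma acc :
  \sum_(v | oddS v) Ex (fun f => ln (lamps (restr f v))) +
  \sum_(u | evenv (val u)) (n_out S (val u))%:R * Ex (fun f => ln (lam (f u))) =
  K * \sum_(u | evenv (val u)) Ex (fun f => ln (lam (f u))).
Proof.
rewrite -(count_sum (fun u => Ex (fun f => ln (lam (f u))))) split_cw addrC.
congr (_ + _).
  by apply: eq_bigr => u eu; rewrite Aw_even // big_set1.
apply: eq_bigr => v ov; rewrite Aw_odd // -Ex_sum.
apply: Ex_eq => f fD; rewrite sum_Nset // /lamps ln_prod //.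
by apply: eq_bigr => k _; rewrite restr_nk.
Qed.

Lemma lnOm_Ex : ln Om =
  \sum_(u | evenv (val u)) Ex (fun f => ln (lam (f u))) +
  \sum_(v | oddS v) Ex (fun f => ln (gtl (restr f v) (f v))) + Hn setT.
Proof.
rewrite -{1}(ExC hP1 (ln Om)) (@Ex_eq _ _ _ Pr D _ (fun f =>
   (\sum_(u | evenv (val u)) ln (lam (f u)) + \sum_(v | oddS v) ln (gtl (restr f v) (f v)))
   + - ln (pA setT f))); last first.
  by move=> f fD; rewrite (lnOm fD) ln_w.
by rewrite ExD ExD !Ex_sum.
Qed.

Lemma ExlnHn (A : {set S}) : Ex (fun f => ln (pA A f)) = - Hn A.
Proof. by rewrite /A.Hn ExN opprK. Qed.

Lemma sum4 (Pp : pred S) (a b c e : S -> R) :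
  \sum_(v | Pp v) (a v + K * b v + c v + K * (e v - c v)) =
  \sum_(v | Pp v) a v + K * \sum_(v | Pp v) b v + \sum_(v | Pp v) c v
  + K * (\sum_(v | Pp v) e v - \sum_(v | Pp v) c v).
Proof. by rewrite !big_split /= -!mulr_sumr sumrB. Qed.

Lemma main_ln : K * ln Om <=
  \sum_(v | oddS v) \sum_(x <- suppX lam lam2 F X v) PXx x * ln (Zx x / PXx x)
  + \sum_(u | has_out_nbr S (val u)) (n_out S (val u))%:R * ln (lamI lam (Su u)).
Proof.
have Hloc : \sum_(v | oddS v) (Ex (fun f => ln (lamps (restr f v)))
      + K * Ex (fun f => ln (gtl (restr f v) (f v))) + Hn (Nset v)
      + K * (Hn (v |: Nset v) - Hn (Nset v)))
   <= \sum_(v | oddS v) \sum_(x <- suppX lam lam2 F X v) PXx x * ln (Zx x / PXx x).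
  apply: ler_sum => v ov; rewrite T1_eq //.
  have := local ov; rewrite !ExlnHn.
  set a := Ex _; set b := Ex _; set c := Hn _; set e := Hn _; set z := Ex _.
  have -> : a + K * b - - c + K * (- c - - e) = a + K * b + c + K * (e - c) by ring.
  by [].
rewrite sum4 in Hloc.
have HT2 := T2_bound.
rewrite (eq_bigr (fun u => (n_out S (val u))%:R * Ex (fun f => ln (lam (f u)))
   + (n_out S (val u))%:R * Hn [set u])) in HT2; last first.
  by move=> u _; rewrite ExlnHn opprK mulrDr.
rewrite big_split /= in HT2.
have Hacc := acc.
have HL := lnOm_Ex.
have Hsh := shear.
have Hch := chain.
rewrite sumrB in Hch.
have K0 : 0 <= K by rewrite ler0n.
have Hch' := ler_wpM2l K0 Hch.
rewrite !mulrDr mulrN in Hch'.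
rewrite HL !mulrDr.
rewrite mulrBr in Hloc.
lra.
Qed.

Lemma final :
  omega lam lam2 F <=
    (\prod_(v : S | ~~ evenv (val v))
       \prod_(x <- suppX lam lam2 F X v)
         (Zpart lam lam2 (Psi lam lam2 F X x) (Iset lam lam2 F X x)
            / PX lam lam2 F X x) `^ ((2 * d)%:R^-1 * PX lam lam2 F X x)) *
    \prod_(u : S | has_out_nbr S (val u))
       (lamI lam (Su u)) `^ ((2 * d)%:R^-1 * (n_out S (val u))%:R).
Proof.
have K0 : 0 < K by rewrite ltr0n muln_gt0 hd.
have ZP0 : forall v, oddS v -> forall x, x \in suppX lam lam2 F X v -> 0 < Zx x / PXx x.
  move=> v ov x xs; have [f fD <-] := suppX_inv xs.
  by rewrite divr_gt0 ?Zx_gt0 ?PXx_gt0.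
set A1 := \prod_(v : S | ~~ evenv (val v)) _.
set B1 := \prod_(u : S | has_out_nbr S (val u)) _.
have eA : forall v, oddS v ->
  \prod_(x <- suppX lam lam2 F X v) (Zx x / PXx x) `^ (K^-1 * PXx x) =
  \prod_(x <- suppX lam lam2 F X v | x \in suppX lam lam2 F X v) (Zx x / PXx x) `^ (K^-1 * PXx x).
  by move=> v ov; rewrite big_seq_cond; apply: eq_bigl => x; rewrite andbT.
have lnA : ln A1 = K^-1 * \sum_(v | oddS v) \sum_(x <- suppX lam lam2 F X v) PXx x * ln (Zx x / PXx x).
  rewrite /A1 ln_prod; last first.
    move=> v ov; rewrite -/(oddS v).
    by rewrite eA // prodr_gt0 // => x xs; rewrite powR_gt0 ?ZP0.
  rewrite mulr_sumr; apply: eq_bigr => v ov.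
  rewrite -/(oddS v).
  rewrite eA // ln_prod; last by move=> x xs; rewrite powR_gt0 ?ZP0.
  rewrite mulr_sumr [RHS]big_seq; apply: eq_bigr => x xs.
  rewrite ln_powR.
  rewrite [RHS]mulrA; reflexivity.
have lnB : ln B1 = K^-1 * \sum_(u | has_out_nbr S (val u)) (n_out S (val u))%:R * ln (lamI lam (Su u)).
  rewrite /B1 ln_prod; last by move=> u hu; rewrite powR_gt0 ?lamI_gt0.
  rewrite mulr_sumr; apply: eq_bigr => u hu.
  rewrite ln_powR [RHS]mulrA; reflexivity.
have A0 : 0 < A1.
  rewrite /A1; apply: prodr_gt0 => v ov.
  by rewrite eA // prodr_gt0 // => x xs; rewrite powR_gt0 ?ZP0.
have B0 : 0 < B1 by rewrite /B1; apply: prodr_gt0 => u hu; rewrite powR_gt0 ?lamI_gt0.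
rewrite -ler_ln ?posrE ?mulr_gt0 // lnM ?posrE // lnA lnB -mulrDr.
rewrite -(ler_pM2l K0) mulrA mulfV ?mul1r ?(negbT (gt_eqF K0)) //.
exact: main_ln.
Qed.


End Main.

Unset Implicit Arguments. Set Strict Implicit. Set Printing Implicit Defensive.

Theorem lemma7p3 (R : realType) (Sp : finType) (lam : Sp -> R)
  (lam2 : Sp -> Sp -> R) (d : nat) (hd : (0 < d)%N)
  (hlam : forall i, 0 < lam i) (hlam2 : forall i j, 0 <= lam2 i j)
  (hsym : forall i j, lam2 i j = lam2 j i)
  (S : {fset vtx d}) (hS : even_set S)
  (Su : S -> {set Sp}) (F : {set {ffun S -> Sp}})
  (hF : forall f, f \in F -> forall u : S, has_out_nbr S (val u) -> f u \in Su u)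
  (hpos : 0 < omega lam lam2 F)
  (T : S -> eqType) (X : forall v : S, {ffun 'I_d * bool -> Sp} -> T v) :
  omega lam lam2 F <=
    (\prod_(v : S | ~~ evenv (val v))
       \prod_(x <- suppX lam lam2 F X v)
         (Zpart lam lam2 (Psi lam lam2 F X x) (Iset lam lam2 F X x)
            / PX lam lam2 F X x) `^ ((2 * d)%:R^-1 * PX lam lam2 F X x)) *
    \prod_(u : S | has_out_nbr S (val u))
       (lamI lam (Su u)) `^ ((2 * d)%:R^-1 * (n_out S (val u))%:R).
Proof.
by apply: final.
Qed.
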